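(* Let $q=2$ and let $C^{\otimes 2}=(\mathbb{G}_a^2,\Phi)$ be the $T$-module with \[\Phi(T)=\begin{pmatrix}T&1\\0&T\end{pmatrix}+\begin{pmatrix}0&0\\1&0\end{pmatrix}\tau.\] Set $t=T^2$ and $\Psi(t)=\Phi(T^2)$, so that $(\mathbb{G}_a^2,\Psi)$ is a $t$-module over $\mathbb{F}_2[t]$. Then the $t$-module $(\mathbb{G}_a^2,\Psi)$ has rank $2$, and its sub-$t$-module $0\times\mathbb{G}_a$ has rank $1$.
   Context: $\tau$ is the Frobenius $z\mapsto z^2$, acting coordinatewise, with $\tau M=M^{(2)}\tau$ for matrices. Explicitly $\Psi(t)=\begin{pmatrix}t&0\\0&t\end{pmatrix}+\begin{pmatrix}1&0\\ \sqrt{t}+t&1\end{pmatrix}\tau$ (here $\sqrt t=T$). A sub-$t$-module is a reduced connected algebraic subgroup stable under $\Psi(t)$. With $\mathcal{F}=\mathbb{F}_2(T)$ the field of coefficients, the rank of a $t$-module (or sub-$t$-module) $\mathcal{B}$ is the rank over $\mathcal{F}[t]$ of $\mathrm{Hom}_{\mathcal{F}}(\mathcal{B},\mathbb{G}_a)$, the $\mathbb{F}_2$-linear algebraic group homomorphisms $\mathcal{B}\to\mathbb{G}_a$ defined over $\mathcal{F}$, which is an $\mathcal{F}[t]$-module via left multiplication by $\mathcal{F}$ and $t\cdot f=f\circ\Psi(t)$. *)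

(* Defs.v *)
From HB Require Import structures.
From mathcomp Require Import all_boot all_order all_algebra.
From mathcomp Require Import fraction.
Set Implicit Arguments. Unset Strict Implicit. Unset Printing Implicit Defensive.
Import Order.TTheory GRing.Theory Num.Theory.
Local Open Scope ring_scope.

Definition FF := {fraction {poly 'F_2}}.
Definition Tf : FF := tofrac ('X : {poly 'F_2}).

(* Twisted polynomials F{tau}: a polynomial p = \sum_i p_i X^i in {poly FF}
   represents the F_2-linear (additive) map  z |-> \sum_i p_i z^(2^i),
   i.e. \sum_i p_i tau^i.  Composition (product in F{tau}):
   (a tau^i)(b tau^j) = a b^(2^i) tau^(i+j). *)
Definition frobn (n : nat) (x : FF) : FF := x ^+ (2 ^ n).

Definition tmul (p q : {poly FF}) : {poly FF} :=
  \sum_(i < size p) \sum_(j < size q) (p`_i * frobn i q`_j) *: 'X^(i + j).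

Definition tmxmul m n p (A : 'M[{poly FF}]_(m, n)) (B : 'M[{poly FF}]_(n, p))
  : 'M[{poly FF}]_(m, p) :=
  \matrix_(i, j) \sum_(k < n) tmul (A i k) (B k j).

(* Phi(T) = [[T,1],[0,T]] + [[0,0],[1,0]] tau  (entry (i,j) : coordinate i
   of the output in terms of coordinate j of the input). *)
Definition PhiT : 'M[{poly FF}]_2 :=
  \matrix_(i < 2, j < 2)
    ((if i == j then Tf%:P else 0)
     + (if (val i == 0%N) && (val j == 1%N) then 1 else 0)
     + (if (val i == 1%N) && (val j == 0%N) then 'X else 0)).

Definition Psit : 'M[{poly FF}]_2 := tmxmul PhiT PhiT.

(* Rank of a module V over the polynomial ring F[t] (= {poly FF}), where the
   action of t is given by the additive map tact and F acts by scaling sc: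
   c . v = \sum_k c_k * (t^k . v). *)
Section Rank.
Variables (V : zmodType) (sc : FF -> V -> V) (tact : V -> V).

Definition polyact (c : {poly FF}) (v : V) : V :=
  \sum_(k < size c) sc c`_k (iter k tact v).

Definition lin_indep n (v : 'I_n -> V) : Prop :=
  forall c : 'I_n -> {poly FF},
    \sum_(i < n) polyact (c i) (v i) = 0 -> forall i, c i = 0.

Definition has_rank (r : nat) : Prop :=
  (exists v : 'I_r -> V, lin_indep v) /\
  (forall n (v : 'I_n -> V), lin_indep v -> (n <= r)%N).
End Rank.

(* Hom_F(G_a^2, G_a): row vectors of twisted polynomials f = (f_1, f_2),
   f(x,y) = f_1(x) + f_2(y); F acts by left multiplication,
   t . f = f o Psi(t). *)
Definition HomGa2 := 'rV[{poly FF}]_2.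
Definition sc2 (a : FF) (f : HomGa2) : HomGa2 := map_mx (fun p => a *: p) f.
Definition tact2 (f : HomGa2) : HomGa2 := tmxmul f Psit.

(* Psi(t)(0,y) = (Psit 0 1 (y), Psit 1 1 (y)); it lies
   in 0 x G_a iff Psit 0 1 = 0.  Hom_F(0 x G_a, G_a) = F{tau} (maps g(y)),
   with t . g = g o (Psi(t) restricted to 0 x G_a) = g o Psit 1 1. *)
Definition stable_0xGa : Prop := Psit 0 1 = 0.
Definition HomSub := {poly FF}.
Definition sc1 (a : FF) (g : HomSub) : HomSub := a *: g.
Definition tact1 (g : HomSub) : HomSub := tmul g (Psit 1 1).

(* Main.v *)
Require Import Defs.
From HB Require Import structures.
From mathcomp Require Import all_boot all_order all_algebra.
From mathcomp Require Import fraction ring.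
Set Implicit Arguments. Unset Strict Implicit. Unset Printing Implicit Defensive.
Import GRing.Theory.


Local Open Scope ring_scope.

Lemma sum2 (R : zmodType) (F : 'I_2 -> R) : \sum_(k < 2) F k = F 0 + F 1.
Proof. rewrite big_ord_recr big_ord1 /=. congr (F _ + F _); exact: val_inj. Qed.

Lemma sum_widen (R : zmodType) n N (F : nat -> R) : (n <= N)%N ->
  (forall i, (n <= i)%N -> F i = 0) -> \sum_(i < n) F i = \sum_(i < N) F i.
Proof.
move=> hn H; rewrite (big_ord_widen N F hn) big_mkcond /=; apply: eq_bigr => i _.
by case: ifP => // /negbT; rewrite -leqNgt => /H ->.
Qed.

Section G.
Variable R : fieldType.

Definition frobR (n : nat) (x : R) : R := x ^+ (2 ^ n).
Definition tmulR (p q : {poly R}) : {poly R} :=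
  \sum_(i < size p) \sum_(j < size q) (p`_i * frobR i q`_j) *: 'X^(i + j).

Lemma frobR0 i : frobR i 0 = 0.
Proof. by rewrite /frobR expr0n expn_eq0. Qed.
Lemma frobR1 i : frobR i 1 = 1.
Proof. by rewrite /frobR expr1n. Qed.
Lemma frobR_0 x : frobR 0 x = x.
Proof. by rewrite /frobR expn0 expr1. Qed.

Lemma tmulE N M (p q : {poly R}) : (size p <= N)%N -> (size q <= M)%N ->
  tmulR p q = \sum_(i < N) \sum_(j < M) (p`_i * frobR i q`_j) *: 'X^(i + j).
Proof.
move=> hp hq; rewrite /tmulR (sum_widen (F := fun i => \sum_(j < size q) (p`_i * frobR i q`_j) *: 'X^(i + j)) hp).
  apply: eq_bigr => i _.
  apply: (sum_widen (F := fun j => (p`_i * frobR i q`_j) *: 'X^(i + j)) hq) => j hj.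
  by rewrite (nth_default 0 hj) frobR0 mulr0 scale0r.
move=> i hi; apply: big1 => j _; by rewrite (nth_default 0 hi) mul0r scale0r.
Qed.

Lemma tmul0l (q : {poly R}) : tmulR 0 q = 0.
Proof. by rewrite /tmulR size_poly0 big_ord0. Qed.
Lemma tmul0r (p : {poly R}) : tmulR p 0 = 0.
Proof. by rewrite /tmulR size_poly0; apply: big1 => i _; rewrite big_ord0. Qed.

Lemma tmulDl (x y q : {poly R}) : tmulR (x + y) q = tmulR x q + tmulR y q.
Proof.
have h : (size (x + y)%R <= size x + size y)%N.
  by apply: leq_trans (size_polyD _ _) _; rewrite geq_max leq_addr leq_addl.
rewrite (tmulE h (leqnn _)) (tmulE (leq_addr (size y) _) (leqnn _))
  (tmulE (leq_addl (size x) _) (leqnn _)) -big_split; apply: eq_bigr => i _.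
rewrite -big_split; apply: eq_bigr => j _; by rewrite coefD mulrDl scalerDl.
Qed.

Lemma tmulZl (a : R) (x q : {poly R}) : tmulR (a *: x) q = a *: tmulR x q.
Proof.
rewrite (tmulE (size_scale_leq _ _) (leqnn _)) /tmulR scaler_sumr; apply: eq_bigr => i _.
rewrite scaler_sumr; apply: eq_bigr => j _; by rewrite coefZ scalerA mulrA.
Qed.

Lemma tmulCC (c d : R) : tmulR c%:P d%:P = (c * d)%:P.
Proof.
rewrite (tmulE (size_polyC_leq1 _) (size_polyC_leq1 _)) big_ord1 big_ord1 /=.
by rewrite !coefC /= frobR_0 expr0 alg_polyC.
Qed.

Lemma tmulX1 : tmulR 'X 1 = 'X.
Proof.
rewrite (tmulE (N := 2) (M := 1)) ?size_polyX ?size_poly1 //.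
rewrite big_ord_recr big_ord1 /= !big_ord1 /= !coefX /= coef1 /=.
by rewrite mul0r scale0r add0r mul1r /frobR expr1n scale1r addn0 expr1.
Qed.

Lemma tmul1X : tmulR 1 'X = 'X.
Proof.
rewrite (tmulE (N := 1) (M := 2)) ?size_polyX ?size_poly1 //.
rewrite big_ord1 big_ord_recr big_ord1 /= !coefX /= coef1 /=.
by rewrite !frobR_0 mulr0 scale0r add0r mulr1 scale1r expr1.
Qed.

Variable T : R.
Hypothesis two0 : (2%:R : R) = 0.

Definition PR : {poly R} := (T * T)%:P + 'X.

Lemma size_PR : (size PR <= 2)%N.
Proof.
apply: leq_trans (size_polyD _ _) _; rewrite geq_max size_polyX andbT.
exact: leq_trans (size_polyC_leq1 _) _.
Qed.

Lemma tactE g : tmulR g PR = g * 'X + \poly_(i < size g) (g`_i * frobR i (T * T)).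
Proof.
have -> : g * 'X = \sum_(i < size g) g`_i *: 'X^(i + 1).
  rewrite -{1}(coefK g) poly_def mulr_suml; apply: eq_bigr => i _.
  by rewrite -scalerAl -exprSr addn1.
rewrite (tmulE (leqnn _) size_PR) poly_def addrC -big_split; apply: eq_bigr => i _.
rewrite big_ord_recr big_ord1 /= /PR !coefD !coefC !coefX /= addr0 add0r.
by rewrite addn0; congr (_ + _); rewrite /frobR expr1n mulr1.
Qed.

Lemma tact_size (g : {poly R}) : g != 0 ->
  size (tmulR g PR) = (size g).+1 /\ lead_coef (tmulR g PR) = lead_coef g.
Proof.
move=> g0; rewrite tactE.
have hs : (size (\poly_(i < size g) (g`_i * frobR i (T * T)))%R < size (g * 'X)%R)%N.
  by rewrite size_mulX // ltnS size_poly.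
split; first by rewrite size_polyDl // size_mulX.
by rewrite lead_coefDl // lead_coefMX.
Qed.

Definition uR k := iter k (fun g => tmulR g PR) 1.

Lemma uR_prop k : size (uR k) = k.+1 /\ lead_coef (uR k) = 1.
Proof.
elim: k => [|k [IH1 IH2]]; first by rewrite /uR /= size_poly1 lead_coef1.
have u0 : uR k != 0 by rewrite -size_poly_gt0 IH1.
by rewrite /uR iterS; case: (tact_size u0) => -> ->; rewrite -/(uR k) IH1 IH2.
Qed.

End G.


Local Open Scope ring_scope.

Lemma rearr0 (V : zmodType) (A B C D E F : V) :
  A + B + (C + D) + (E + F) = (A + C + E) + (B + D + F).
Proof.
rewrite -!addrA; congr (A + _); rewrite addrCA; congr (C + _).
by rewrite [RHS]addrCA; congr (B + _); rewrite addrCA.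
Qed.
Lemma rearr (V : zmodType) (A B C D E F : V) :
  A + (B + (C + (D + (E + F)))) = (A + C + E) + (B + D + F).
Proof. by rewrite -rearr0 -!addrA. Qed.

Section PA.
Variables (R : fieldType) (V : zmodType) (sc : R -> V -> V) (tact : V -> V).
Hypothesis scD : forall a x y, sc a (x + y) = sc a x + sc a y.
Hypothesis scDl : forall a b x, sc (a + b) x = sc a x + sc b x.
Hypothesis scM : forall a b x, sc a (sc b x) = sc (a * b) x.
Hypothesis tD : forall x y, tact (x + y) = tact x + tact y.
Hypothesis sc1 : forall x, sc 1 x = x.
Hypothesis tsc : forall a x, tact (sc a x) = sc a (tact x).

Definition polyactR (c : {poly R}) (v : V) : V :=
  \sum_(k < size c) sc c`_k (iter k tact v).

Lemma sc0 x : sc 0 x = 0.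
Proof. by apply: (addrI (sc 0 x)); rewrite -scDl !addr0. Qed.
Lemma sc_0 a : sc a 0 = 0.
Proof. by apply: (addrI (sc a 0)); rewrite -scD !addr0. Qed.
Lemma t0 : tact 0 = 0.
Proof. by apply: (addrI (tact 0)); rewrite -tD !addr0. Qed.

Lemma polyactE N (c : {poly R}) (v : V) : (size c <= N)%N ->
  polyactR c v = \sum_(k < N) sc c`_k (iter k tact v).
Proof.
move=> h; apply: (sum_widen (F := fun k => sc c`_k (iter k tact v)) h).
by move=> i hi; rewrite (nth_default 0 hi) sc0.
Qed.

Lemma polyact0 (v : V) : polyactR 0 v = 0.
Proof. by rewrite /polyactR size_poly0 big_ord0. Qed.

Lemma polyactD (c d : {poly R}) (v : V) : polyactR (c + d) v = polyactR c v + polyactR d v.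
Proof.
have h : (size (c + d)%R <= size c + size d)%N.
  by apply: leq_trans (size_polyD _ _) _; rewrite geq_max leq_addr leq_addl.
rewrite (polyactE v h) (polyactE v (leq_addr (size d) _))
  (polyactE v (leq_addl (size c) _)) -big_split; apply: eq_bigr => i _.
by rewrite coefD scDl.
Qed.

Lemma polyact_sum n (c : 'I_n -> {poly R}) (v : V) :
  polyactR (\sum_(i < n) c i) v = \sum_(i < n) polyactR (c i) v.
Proof. exact: (big_morph (fun p => polyactR p v) (fun p q => polyactD p q v) (polyact0 v)). Qed.

Lemma iterD k (x y : V) : iter k tact (x + y) = iter k tact x + iter k tact y.
Proof. by elim: k => //= k ->; rewrite tD. Qed.
Lemma iter0 k : iter k tact 0 = 0.
Proof. by elim: k => //= k ->; rewrite t0. Qed.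
Lemma iter_sc k a (x : V) : iter k tact (sc a x) = sc a (iter k tact x).
Proof. by elim: k => //= k ->; rewrite tsc. Qed.

Lemma polyact_vD (c : {poly R}) (x y : V) : polyactR c (x + y) = polyactR c x + polyactR c y.
Proof. by rewrite /polyactR -big_split; apply: eq_bigr => i _; rewrite iterD scD. Qed.
Lemma polyact_v0 (c : {poly R}) : polyactR c 0 = 0.
Proof. by rewrite /polyactR; apply: big1 => i _; rewrite iter0 sc_0. Qed.

Lemma sc_sum a n (F : 'I_n -> V) : sc a (\sum_(i < n) F i) = \sum_(i < n) sc a (F i).
Proof. exact: (big_morph (sc a) (scD a) (sc_0 a)). Qed.
Lemma tact_sum n (F : 'I_n -> V) : tact (\sum_(i < n) F i) = \sum_(i < n) tact (F i).
Proof. exact: (big_morph tact tD t0). Qed.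

Lemma sc_polyact a (d : {poly R}) (w : V) : sc a (polyactR d w) = polyactR (a *: d) w.
Proof.
rewrite (polyactE w (size_scale_leq a d)) sc_sum; apply: eq_bigr => i _.
by rewrite coefZ scM.
Qed.

Lemma tact_polyact (d : {poly R}) (w : V) : tact (polyactR d w) = polyactR d (tact w).
Proof. by rewrite tact_sum; apply: eq_bigr => i _; rewrite tsc -iterSr. Qed.

Lemma polyactX (d : {poly R}) (v : V) : polyactR ('X * d) v = polyactR d (tact v).
Proof.
rewrite (polyactE v (N := (size d).+1)); last first.
  by apply: leq_trans (size_polyMleq _ _) _; rewrite size_polyX.
rewrite big_ord_recl coefXM /= sc0 add0r; apply: eq_bigr => i _.
by rewrite coefXM /= -iterSr.
Qed.

Lemma polyactXn k (d : {poly R}) (v : V) : polyactR ('X^k * d) v = polyactR d (iter k tact v).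
Proof.
elim: k v => [|k IH] v; first by rewrite expr0 mul1r.
by rewrite exprS -mulrA polyactX IH -iterSr.
Qed.

Lemma iter_polyact k (d : {poly R}) (w : V) :
  iter k tact (polyactR d w) = polyactR d (iter k tact w).
Proof. by elim: k => //= k ->; rewrite tact_polyact. Qed.

Lemma polyactM (c d : {poly R}) (v : V) : polyactR (c * d) v = polyactR c (polyactR d v).
Proof.
rewrite -{1}(coefK c) poly_def mulr_suml polyact_sum.
rewrite [RHS](_ : _ = \sum_(k < size c) sc c`_k (iter k tact (polyactR d v))) //.
apply: eq_bigr => i _.
by rewrite -scalerAl -sc_polyact polyactXn iter_polyact.
Qed.

Lemma polyactXnC a k (v : V) : polyactR (a *: 'X^k) v = sc a (iter k tact v).
Proof.
rewrite -['X^k]mulr1 scalerAr polyactXn -sc_polyact.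
by rewrite /polyactR size_poly1 big_ord1 coef1 /= sc1.
Qed.



Definition lin_indepR n (v : 'I_n -> V) : Prop :=
  forall c : 'I_n -> {poly R},
    \sum_(i < n) polyactR (c i) (v i) = 0 -> forall i, c i = 0.

Lemma dep1 (b : V) : (forall v, exists c, v = polyactR c b) ->
  forall n (v : 'I_n -> V), lin_indepR v -> (n <= 1)%N.
Proof.
move=> gen [|[|n]] v Hi //.
have [a ha] := gen (v ord0). have [a' ha'] := gen (v (lift ord0 ord0)).
have [d0 [d1 [nz E]]] : exists d0 d1 : {poly R},
    (d0 != 0 \/ d1 != 0) /\ d0 * a + d1 * a' = 0.
  case: (eqVneq a 0) => [->|ha0].
    by exists 1, 0; rewrite oner_neq0 mulr0 mul0r addr0; split; [left|].
  exists a', (- a); split; first by right; rewrite oppr_eq0.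
  by rewrite mulNr mulrC subrr.
pose c (i : 'I_n.+2) := if val i == 0%N then d0 else if val i == 1%N then d1 else 0.
have H := Hi c.
have : \sum_(i < n.+2) polyactR (c i) (v i) = 0.
  rewrite 2!big_ord_recl big1 ?addr0; last by move=> i _; rewrite /c /= polyact0.
  by rewrite /c /= ha ha' -!polyactM -polyactD E polyact0.
move=> /H h; suff : False by []; case: nz => /negP; apply; apply/eqP; [exact: (h ord0) | exact: (h (lift ord0 ord0))].
Qed.

Lemma alg2 (x1 x2 y1 y2 z1 z2 : {poly R}) : exists d0 d1 d2 : {poly R},
  (d0 != 0 \/ d1 != 0 \/ d2 != 0) /\
  d0 * x1 + d1 * y1 + d2 * z1 = 0 /\ d0 * x2 + d1 * y2 + d2 * z2 = 0.
Proof.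
pose D1 := y1 * z2 - y2 * z1; pose D2 := x1 * z2 - x2 * z1; pose D3 := x1 * y2 - x2 * y1.
case: (eqVneq D1 0) => h1; last first.
  exists D1, (- D2), D3; split; first by left.
  by split; rewrite /D1 /D2 /D3; ring.
case: (eqVneq D2 0) => h2; last first.
  exists D1, (- D2), D3; split; first by right; left; rewrite oppr_eq0.
  by split; rewrite /D1 /D2 /D3; ring.
case: (eqVneq D3 0) => h3; last first.
  exists D1, (- D2), D3; split; first by right; right.
  by split; rewrite /D1 /D2 /D3; ring.
case: (eqVneq x1 0) => hx1; last first.
  exists y1, (- x1), 0; split; first by right; left; rewrite oppr_eq0.
  split; first by ring.
  have e : y1 * x2 + - x1 * y2 + 0 * z2 = - D3 by rewrite /D3; ring.
  by rewrite e h3 oppr0.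
case: (eqVneq x2 0) => hx2; last first.
  exists y2, (- x2), 0; split; first by right; left; rewrite oppr_eq0.
  split; last by ring.
  have e : y2 * x1 + - x2 * y1 + 0 * z1 = D3 by rewrite /D3 hx1; ring.
  by rewrite e h3.
exists 1, 0, 0; split; first by left; rewrite oner_neq0.
by rewrite hx1 hx2; split; ring.
Qed.

Lemma dep2 (b1 b2 : V) :
  (forall v, exists c1 c2, v = polyactR c1 b1 + polyactR c2 b2) ->
  forall n (v : 'I_n -> V), lin_indepR v -> (n <= 2)%N.
Proof.
move=> gen [|[|[|n]]] v Hi //.
have [x1 [x2 hx]] := gen (v ord0).
have [y1 [y2 hy]] := gen (v (lift ord0 ord0)).
have [z1 [z2 hz]] := gen (v (lift ord0 (lift ord0 ord0))).
have [d0 [d1 [d2 [nz [E1 E2]]]]] := alg2 x1 x2 y1 y2 z1 z2.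
pose c (i : 'I_n.+3) := if val i == 0%N then d0 else if val i == 1%N then d1
  else if val i == 2%N then d2 else 0.
have H := Hi c.
have : \sum_(i < n.+3) polyactR (c i) (v i) = 0.
  rewrite 3!big_ord_recl big1 ?addr0; last by move=> i _; rewrite /c /= polyact0.
  rewrite /c /= hx hy hz !polyact_vD -!polyactM.
  have e1 : polyactR (d0 * x1) b1 + polyactR (d1 * y1) b1 + polyactR (d2 * z1) b1 = 0.
    by rewrite -!polyactD E1 polyact0.
  have e2 : polyactR (d0 * x2) b2 + polyactR (d1 * y2) b2 + polyactR (d2 * z2) b2 = 0.
    by rewrite -!polyactD E2 polyact0.
  by rewrite -!addrA rearr e1 e2 addr0.
move=> /H h; suff : False by [].
case: nz => [|[]] /negP; apply; apply/eqP;
  [exact: (h ord0) | exact: (h (lift ord0 ord0)) | exact: (h (lift ord0 (lift ord0 ord0)))].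
Qed.

End PA.


Local Open Scope ring_scope.

Section M1.
Variable R : fieldType.
Variable T : R.

Definition sc1R (a : R) (g : {poly R}) : {poly R} := a *: g.
Definition tact1R (g : {poly R}) : {poly R} := tmulR g (PR T).
Definition pa1 := polyactR sc1R tact1R.

Lemma pa1D c d v : pa1 (c + d) v = pa1 c v + pa1 d v.
Proof. by apply: polyactD => *; rewrite /sc1R scalerDl. Qed.

Lemma pa1XnC a k : pa1 (a *: 'X^k) 1 = a *: uR T k.
Proof.
apply: polyactXnC => *; rewrite /sc1R /tact1R ?scalerDr ?scalerDl ?scalerA ?scale1r
  ?tmulDl ?tmulZl //.
Qed.

Lemma pa1E c : pa1 c 1 = \sum_(k < size c) c`_k *: uR T k.
Proof. by []. Qed.

Lemma size_comb n (a : nat -> R) : (size (\sum_(k < n) a k *: uR T k)%R <= n)%N.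
Proof.
elim: n => [|n IH]; first by rewrite big_ord0 size_poly0.
rewrite big_ord_recr /=; apply: leq_trans (size_polyD _ _) _.
rewrite geq_max (leq_trans IH) //=.
by apply: leq_trans (size_scale_leq _ _) _; case: (uR_prop T n) => -> _.
Qed.

Lemma size_pa1 c : c != 0 -> size (pa1 c 1) = size c.
Proof.
move=> c0; rewrite pa1E.
have [n hn] : exists n, size c = n.+1.
  by exists (size c).-1; rewrite prednK // size_poly_gt0.
rewrite hn big_ord_recr /= addrC.
have hl : c`_n != 0 by rewrite -[n]/((n.+1).-1) -hn -lead_coefE lead_coef_eq0.
have hs : size (c`_n *: uR T n) = n.+1 by rewrite size_scale //; case: (uR_prop T n).
by rewrite size_polyDl hs // (leq_ltn_trans (size_comb _ _)).
Qed.

Lemma indep1 c : pa1 c 1 = 0 -> c = 0.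
Proof.
move=> h; apply/eqP; apply/negPn/negP => c0.
by move: (size_pa1 c0); rewrite h size_poly0 => /esym/eqP; rewrite size_poly_eq0 (negbTE c0).
Qed.

Lemma surj1 g : exists c, g = pa1 c 1.
Proof.
move: {2}(size g) (leqnn (size g)) => n; elim: n g => [|n IH] g hg.
  by exists 0; move: hg; rewrite leqn0 size_poly_eq0 => /eqP ->; rewrite /pa1 polyact0.
case: (leqP (size g) n) => hgn; first exact: IH.
have hsz : size g = n.+1 by apply/eqP; rewrite eqn_leq hg hgn.
pose a := lead_coef g; pose h := g - a *: uR T n.
have [us ul] := uR_prop T n.
have hh : (size h <= n)%N.
  apply/leq_sizeP => j hj; case: (ltngtP j n) => [|hjn|->].
  - by rewrite ltnNge hj.
  - have hs : (size h <= n.+1)%N.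
      rewrite /h; apply: leq_trans (size_polyD _ _) _; rewrite geq_max hg size_polyN.
      by apply: leq_trans (size_scale_leq _ _) _; rewrite us.
    by move/leq_sizeP: hs; apply.
  - rewrite /h coefB coefZ.
    have -> : (uR T n)`_n = 1 by rewrite -ul lead_coefE us.
    by rewrite mulr1 /a lead_coefE hsz subrr.
have [c hc] := IH h hh.
exists (c + a *: 'X^n); rewrite pa1D -hc pa1XnC /h.
by rewrite subrK.
Qed.

End M1.


Local Open Scope ring_scope.

Lemma polyact_morph (R : fieldType) (V W : zmodType) (sc : R -> V -> V) (tact : V -> V)
  (sc' : R -> W -> W) (tact' : W -> W) (h : V -> W) :
  (forall x y, h (x + y) = h x + h y) -> h 0 = 0 ->
  (forall a x, h (sc a x) = sc' a (h x)) -> (forall x, h (tact x) = tact' (h x)) ->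
  forall c v, h (polyactR sc tact c v) = polyactR sc' tact' c (h v).
Proof.
move=> hD h0 hsc ht c v; rewrite /polyactR (big_morph h hD h0); apply: eq_bigr => i _.
rewrite hsc; congr (sc' _ _); by elim: (nat_of_ord i) => //= k <-; rewrite ht.
Qed.

Section M2.
Variable R : fieldType.
Variable T : R.
Hypothesis two0 : (2%:R : R) = 0.

Definition PhiTR : 'M[{poly R}]_2 :=
  \matrix_(i < 2, j < 2)
    ((if i == j then T%:P else 0)
     + (if (val i == 0%N) && (val j == 1%N) then 1 else 0)
     + (if (val i == 1%N) && (val j == 0%N) then 'X else 0)).

Definition tmxmulR m n p (A : 'M[{poly R}]_(m, n)) (B : 'M[{poly R}]_(n, p))
  : 'M[{poly R}]_(m, p) :=
  \matrix_(i, j) \sum_(k < n) tmulR (A i k) (B k j).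

Definition PsitR : 'M[{poly R}]_2 := tmxmulR PhiTR PhiTR.

Lemma Phi00 : PhiTR 0 0 = T%:P. Proof. by rewrite mxE /= addr0 addr0. Qed.
Lemma Phi01 : PhiTR 0 1 = 1. Proof. by rewrite mxE /= add0r addr0. Qed.
Lemma Phi10 : PhiTR 1 0 = 'X. Proof. by rewrite mxE /= add0r add0r. Qed.
Lemma Phi11 : PhiTR 1 1 = T%:P. Proof. by rewrite mxE /= addr0 addr0. Qed.

Lemma PsitE i j : PsitR i j = tmulR (PhiTR i 0) (PhiTR 0 j) + tmulR (PhiTR i 1) (PhiTR 1 j).
Proof. by rewrite mxE sum2. Qed.

Lemma Psit01 : PsitR 0 1 = 0.
Proof.
rewrite PsitE Phi00 Phi01 Phi11 -polyC1 !tmulCC mulr1 mul1r -polyCD.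
by rewrite -mulr2n -mulr_natr two0 mulr0.
Qed.

Lemma Psit11 : PsitR 1 1 = PR T.
Proof. by rewrite PsitE Phi10 Phi01 Phi11 tmulX1 tmulCC addrC. Qed.

Lemma Psit00 : PsitR 0 0 = PR T.
Proof. by rewrite PsitE Phi00 Phi01 Phi10 tmul1X tmulCC. Qed.


Definition sc2R (a : R) (f : 'rV[{poly R}]_2) : 'rV[{poly R}]_2 := map_mx (fun p => a *: p) f.
Definition tact2R (f : 'rV[{poly R}]_2) : 'rV[{poly R}]_2 := tmxmulR f PsitR.
Definition pa2 := polyactR sc2R tact2R.

Lemma sc2D a x y : sc2R a (x + y) = sc2R a x + sc2R a y.
Proof. by apply/matrixP => i j; rewrite !mxE scalerDr. Qed.
Lemma sc2Dl a b x : sc2R (a + b) x = sc2R a x + sc2R b x.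
Proof. by apply/matrixP => i j; rewrite !mxE scalerDl. Qed.
Lemma sc2M a b x : sc2R a (sc2R b x) = sc2R (a * b) x.
Proof. by apply/matrixP => i j; rewrite !mxE scalerA. Qed.
Lemma sc21 x : sc2R 1 x = x.
Proof. by apply/matrixP => i j; rewrite !mxE scale1r. Qed.
Lemma t2D x y : tact2R (x + y) = tact2R x + tact2R y.
Proof.
apply/matrixP => i j; rewrite !mxE -big_split; apply: eq_bigr => k _.
by rewrite mxE tmulDl.
Qed.
Lemma t2sc a x : tact2R (sc2R a x) = sc2R a (tact2R x).
Proof.
apply/matrixP => i j; rewrite !mxE scaler_sumr; apply: eq_bigr => k _.
by rewrite mxE tmulZl.
Qed.

Definition iotaR (g : {poly R}) : 'rV[{poly R}]_2 := \row_(j < 2) (if val j == 0%N then g else 0).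
Definition e2 : 'rV[{poly R}]_2 := \row_(j < 2) (if val j == 0%N then 0 else 1).
Definition pi2 (f : 'rV[{poly R}]_2) : {poly R} := f ord0 1.

Lemma pi2_pa c f : pi2 (pa2 c f) = pa1 T c (pi2 f).
Proof.
apply: polyact_morph => [x y||a x|x]; rewrite /pi2 /sc2R /sc1R /tact1R ?mxE //.
by rewrite sum2 Psit01 Psit11 tmul0r add0r.
Qed.

Lemma iota_pa c g : iotaR (pa1 T c g) = pa2 c (iotaR g).
Proof.
apply: polyact_morph => [x y||a x|x]; apply/rowP => j; rewrite /sc2R /sc1R /tact1R !mxE //=.
- by case: ifP; rewrite ?addr0.
- by case: ifP; rewrite ?scaler0.
- by case: ifP; rewrite ?scaler0.
rewrite sum2 !mxE /= tmul0l addr0.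
case: ifP => hj.
  have -> : j = 0 by apply: val_inj; apply/eqP.
  by rewrite -Psit00 /PsitR mxE.
have -> : j = 1 by apply: val_inj; case: j hj => [[|[|]]] //.
by have := Psit01; rewrite /PsitR mxE => ->; rewrite tmul0r.
Qed.


Lemma pi2D x y : pi2 (x + y) = pi2 x + pi2 y. Proof. by rewrite /pi2 !mxE. Qed.
Lemma pi2B x y : pi2 (x - y) = pi2 x - pi2 y. Proof. by rewrite /pi2 !mxE. Qed.

Lemma pa1_v0 c : pa1 T c 0 = 0.
Proof.
apply: polyact_v0 => *; rewrite /sc1R /tact1R ?scalerDr ?scaler0 ?tmul0l ?tmulDl //.
Qed.
Lemma pa2_0 v : pa2 0 v = 0.
Proof. exact: polyact0. Qed.

Lemma indep2 : lin_indepR sc2R tact2R (fun i : 'I_2 => if val i == 0%N then iotaR 1 else e2).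
Proof.
move=> c; rewrite sum2 /= => H.
change (pa2 (c 0) (iotaR 1) + pa2 (c 1) e2 = 0) in H.
have h1 : c 1 = 0.
  have := congr1 pi2 H; rewrite pi2D !pi2_pa.
  have -> : pi2 (iotaR 1) = 0 by rewrite /pi2 mxE.
  have -> : pi2 e2 = 1 by rewrite /pi2 mxE.
  have -> : pi2 0 = 0 by rewrite /pi2 mxE.
  by rewrite pa1_v0 add0r => /indep1.
have h0 : c 0 = 0.
  move: H; rewrite h1 pa2_0 addr0 -iota_pa => /(congr1 (fun f : 'rV[{poly R}]_2 => f ord0 0)).
  by rewrite !mxE /= => /indep1.
by move=> i; case: i => [[|[|]]] // hi; [rewrite -h0 | rewrite -h1]; congr c; apply: val_inj.
Qed.

Lemma iota_pi2 w : pi2 w = 0 -> w = iotaR (w ord0 0).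
Proof.
move=> hw; apply/rowP => j; rewrite [RHS]mxE; case: j => [[|[|]]] // hj /=.
  by congr (w _ _); apply: val_inj.
by rewrite -hw /pi2; congr (w _ _); apply: val_inj.
Qed.

Lemma gen2 f : exists c1 c2, f = pa2 c1 (iotaR 1) + pa2 c2 e2.
Proof.
have [d hd] := surj1 T (pi2 f).
pose w := f - pa2 d e2.
have hw : pi2 w = 0.
  rewrite pi2B pi2_pa.
  have -> : pi2 e2 = 1 by rewrite /pi2 mxE.
  by rewrite -hd subrr.
have ew := iota_pi2 hw.
have [c hc] := surj1 T (w ord0 0).
exists c, d; rewrite -iota_pa -hc -ew /w.
by rewrite subrK.
Qed.

Lemma rank2 : (exists v : 'I_2 -> 'rV[{poly R}]_2, lin_indepR sc2R tact2R v) /\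
  (forall n (v : 'I_n -> 'rV[{poly R}]_2), lin_indepR sc2R tact2R v -> (n <= 2)%N).
Proof.
split; first by exists (fun i : 'I_2 => if val i == 0%N then iotaR 1 else e2); exact: indep2.
exact: (dep2 sc2D sc2Dl sc2M t2D t2sc gen2).
Qed.

Lemma rank1 : (exists v : 'I_1 -> {poly R}, lin_indepR (sc1R (R:=R)) (tact1R T) v) /\
  (forall n (v : 'I_n -> {poly R}), lin_indepR (sc1R (R:=R)) (tact1R T) v -> (n <= 1)%N).
Proof.
split.
  exists (fun _ => 1) => c; rewrite big_ord1 => /indep1 h i.
  by rewrite (ord1 i).
apply: (dep1 _ _ _ _ _ (surj1 T)).
- by move=> *; rewrite /sc1R scalerDr.
- by move=> *; rewrite /sc1R scalerDl.
- by move=> *; rewrite /sc1R scalerA.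
- by move=> *; rewrite /tact1R tmulDl.
- by move=> *; rewrite /tact1R /sc1R tmulZl.
Qed.

End M2.


Local Open Scope ring_scope.

Lemma two_FF : (2%:R : FF) = 0.
Proof.
rewrite /FF -tofrac1 -tofracMn -tofrac0; congr tofrac.
by rewrite -polyC1 -polyCMn (pchar_Fp_0 (isT : prime 2)).
Qed.

Close Scope ring_scope.
Theorem proposition6 :
  has_rank sc2 tact2 2 /\ stable_0xGa /\ has_rank sc1 tact1 1.
Proof.
split; [|split].
- exact: (@rank2 FF Tf two_FF).
- exact: (@Psit01 FF Tf two_FF).
- have e : Psit 1%R 1%R = PR Tf := @Psit11 FF Tf.
  rewrite /has_rank /lin_indep /polyact /tact1 e.
  exact: (@rank1 FF Tf).
Qed.
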